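(* Let $n\geq1$, $N=n+1$, and let $x\in CF(N)$ satisfy $\pi(x)\in\mathrm{Ker}(\partial_n)$. Then $x$ can be written uniquely as $$x=\big[(1,1,u)+(-1,-1,u)+(-1,1,v)+(1,-1,v)+(1,1,w)+(-1,1,w)\big]+(1,1,t)$$ with $u,v,w\in CF(n)$ and $t\in\mathrm{Ker}(\partial_n)$. Moreover, $\partial_N(x)=0$ if and only if $$\partial_nv=w+t+\eta_n w,\qquad \partial_nu=w+\eta_n t+\eta_n w,\qquad \partial_nw=0.$$
   Context: For $m\geq1$, $CF(m)$ is the $\mathbb{Z}_2$-vector space with basis the tuples $(\epsilon_1,\dots,\epsilon_{2m-1})\in\{\pm1\}^{2m-1}$. Linear maps $\eta_m,\tilde\partial_m:CF(m)\to CF(m)$ are given on basis elements by $\eta_m(\epsilon_1,\dots,\epsilon_{2m-1})=(-\epsilon_1,\dots,-\epsilon_{2m-1})$ and $\tilde\partial_m(\epsilon_1,\dots,\epsilon_{2m-1})=\sum_{i=1}^{2m-1}(\epsilon_1,\dots,-\epsilon_i,\dots,\epsilon_{2m-1})$, and $\partial_m=\tilde\partial_m+\eta_m$. $\pi:CF(N)\to CF(n)$ removes the first two coordinates of a basis tuple, extended linearly. For $a,b\in\{\pm1\}$ and $y\in CF(n)$, $(a,b,y)\in CF(N)$ denotes the element obtained by prefixing $(a,b)$ to every basis tuple in $y$, extended linearly (e.g. $(a,b,y_1+y_2)=(a,b,y_1)+(a,b,y_2)$). *)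

(* Defs.v *)
From HB Require Import structures.
From mathcomp Require Import all_boot all_order all_algebra.
Set Implicit Arguments. Unset Strict Implicit. Unset Printing Implicit Defensive.
Import GRing.Theory.
Local Open Scope ring_scope.

(* Length of the basis tuples of CF(m): for m >= 1 this is 2m-1.
   (Written as (m-1)*2+1 so that len (k.+2) is convertible to (len k.+1).+2.) *)
Definition len (m : nat) : nat := (m.-1).*2.+1.

(* Signs: true encodes +1, false encodes -1. *)
Definition basis (m : nat) := (len m).-tuple bool.

(* CF(m) (F_2^o = F_2 viewed as a module over itself): the F_2-vector space with basis {+-1}^(2m-1), i.e. F_2-valued
   (coefficient) functions on the basis. *)
Notation CF m := {ffun basis m -> ('F_2)^o}.

Definition bvec (m : nat) (e : basis m) : CF m := [ffun e' => ((e' == e) : nat)%:R].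

Definition linext (m m' : nat) (f : basis m -> CF m') (y : CF m) : CF m' :=
  \sum_(e : basis m) y e *: f e.

Definition negt (m : nat) (e : basis m) : basis m := [tuple ~~ tnth e j | j < len m].
Definition flipt (m : nat) (i : 'I_(len m)) (e : basis m) : basis m :=
  [tuple (if j == i then ~~ tnth e j else tnth e j) | j < len m].

Definition eta (m : nat) : CF m -> CF m := linext (fun e => bvec (negt e)).
Definition dtil (m : nat) : CF m -> CF m :=
  linext (fun e => \sum_(i < len m) bvec (flipt i e)).
Definition partial (m : nat) (y : CF m) : CF m := dtil y + eta y.

Definition proj (k : nat) : CF k.+2 -> CF k.+1 :=
  linext (fun e : basis k.+2 =>
    @bvec k.+1 (behead_tuple (behead_tuple e))).

(* (a, b, y) : prefix (a,b) to every basis tuple of y, extended linearly *)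
Definition prefix (k : nat) (a b : bool) (y : CF k.+1) : CF k.+2 :=
  linext (fun e : basis k.+1 =>
    @bvec k.+2 (cons_tuple a (cons_tuple b e))) y.

Definition decomp (k : nat) (u v w t : CF k.+1) : CF k.+2 :=
  prefix true true u + prefix false false u + prefix false true v
  + prefix true false v + prefix true true w + prefix false true w
  + prefix true true t.

(* Main.v *)
Require Import Defs.
From mathcomp Require Import all_boot all_order all_algebra.
Import GRing.Theory.
Local Open Scope ring_scope.
Set Implicit Arguments.

Definition c {k} a b (e : basis k.+1) : basis k.+2 := cons_tuple a (cons_tuple b e).

Lemma tuple_split k (e : basis k.+2) :
  e = c (thead e) (thead (behead_tuple e)) (behead_tuple (behead_tuple e)).
Proof. apply: val_inj; rewrite /c; case: e => [[|a [|b s]] Hs] //=. Qed.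

Lemma cons_eq n (a a' : bool) (t t' : n.-tuple bool) :
  (cons_tuple a t == cons_tuple a' t') = (a == a') && (t == t').
Proof. by rewrite -val_eqE /= eqseq_cons val_eqE. Qed.

Lemma negtK m (e : basis m) : negt (negt e) = e.
Proof. by apply: eq_from_tnth => j; rewrite !tnth_mktuple negbK. Qed.

Lemma fliptK m i (e : basis m) : flipt i (flipt i e) = e.
Proof. apply: eq_from_tnth => j; rewrite !tnth_mktuple; case: eqP => [->|] //; by rewrite negbK. Qed.

Lemma tnthc2 k a b (e : basis k.+1) j (Hj : (j.+2 < len k.+2)%N) (Hj' : (j < len k.+1)%N) :
  tnth (c a b e) (Ordinal Hj) = tnth e (Ordinal Hj').
Proof. by rewrite !(tnth_nth false). Qed.
Lemma tnthc0 k a b (e : basis k.+1) (Hj : (0 < len k.+2)%N) :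
  tnth (c a b e) (Ordinal Hj) = a.
Proof. by rewrite !(tnth_nth false). Qed.
Lemma tnthc1 k a b (e : basis k.+1) (Hj : (1 < len k.+2)%N) :
  tnth (c a b e) (Ordinal Hj) = b.
Proof. by rewrite !(tnth_nth false). Qed.

Arguments negtK {m}.
Arguments fliptK {m}.

Lemma negt_c k a b (e : basis k.+1) : negt (c a b e) = c (~~a) (~~b) (negt e).
Proof. apply: eq_from_tnth => j; rewrite !tnth_mktuple;   case: j => [[|[|j]] Hj]; [rewrite !tnthc0|rewrite !tnthc1|   have Hj' : (j < len k.+1)%N by []; rewrite !(@tnthc2 _ _ _ _ _ Hj Hj') ?tnth_mktuple] => //. Qed.

Lemma flip0_c k a b (e : basis k.+1) :
  flipt (ord0 : 'I_(len k.+2)) (c a b e) = c (~~a) b e.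
Proof. apply: eq_from_tnth => j; rewrite !tnth_mktuple;   case: j => [[|[|j]] Hj]; [rewrite !tnthc0|rewrite !tnthc1|   have Hj' : (j < len k.+1)%N by []; rewrite !(@tnthc2 _ _ _ _ _ Hj Hj') ?tnth_mktuple] => //. Qed.

Lemma flip1_c k a b (e : basis k.+1) :
  flipt (lift ord0 ord0 : 'I_(len k.+2)) (c a b e) = c a (~~b) e.
Proof. apply: eq_from_tnth => j; rewrite !tnth_mktuple;   case: j => [[|[|j]] Hj]; [rewrite !tnthc0|rewrite !tnthc1|   have Hj' : (j < len k.+1)%N by []; rewrite !(@tnthc2 _ _ _ _ _ Hj Hj') ?tnth_mktuple] => //. Qed.

Lemma flipS_c k a b (e : basis k.+1) (i : 'I_(len k.+1)) :
  flipt (lift ord0 (lift ord0 i) : 'I_(len k.+2)) (c a b e) = c a b (flipt i e).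
Proof. apply: eq_from_tnth => j; rewrite !tnth_mktuple;   case: j => [[|[|j]] Hj]; [rewrite !tnthc0|rewrite !tnthc1|   have Hj' : (j < len k.+1)%N by []; rewrite !(@tnthc2 _ _ _ _ _ Hj Hj') ?tnth_mktuple] => //. Qed.

Definition F2 := ('F_2)^o.

Lemma linextE m m' (f : basis m -> CF m') (y : CF m) e :
  linext f y e = \sum_e0 y e0 * f e0 e.
Proof. rewrite /linext sum_ffunE; apply: eq_bigr => e0 _; by rewrite ffunE. Qed.

Lemma bvecE m (e e' : basis m) : bvec e e' = ((e' == e) : nat)%:R.
Proof. by rewrite ffunE. Qed.

Lemma sum_delta (T : finType) (F : T -> F2) e1 :
  \sum_e0 F e0 * ((e1 == e0) : nat)%:R = F e1.
Proof.
rewrite (bigD1 e1) //= eqxx mulr1 big1 ?addr0 // => e0 /negbTE.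
by rewrite eq_sym => ->; rewrite mulr0.
Qed.

Arguments sum_delta {T}.

Lemma etaE m (y : CF m) e : eta y e = y (negt e).
Proof.
rewrite /eta linextE -(sum_delta (fun e0 => y e0) (negt e)); apply: eq_bigr => e0 _.
by rewrite bvecE -{1}(negtK e) (inj_eq (can_inj (@negtK m))).
Qed.

Lemma dtilE m (y : CF m) e : dtil y e = \sum_i y (flipt i e).
Proof.
rewrite /dtil linextE.
under eq_bigr => e0 _ do rewrite sum_ffunE mulr_sumr.
rewrite exchange_big /=; apply: eq_bigr => i _.
rewrite -(sum_delta (fun e0 => y e0) (flipt i e)); apply: eq_bigr => e0 _.
by rewrite bvecE -{1}(fliptK i e) (inj_eq (can_inj (@fliptK m i))).
Qed.

Lemma bb_c k a b (e : basis k.+1) : behead_tuple (behead_tuple (c a b e)) = e.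
Proof. by apply: val_inj. Qed.

Lemma sum_split k (F : basis k.+2 -> F2) :
  \sum_e F e = \sum_(a : bool) \sum_(b : bool) \sum_(e : basis k.+1) F (c a b e).
Proof.
rewrite (reindex (fun p : bool * bool * basis k.+1 => c p.1.1 p.1.2 p.2)) /=.
  by rewrite pair_big pair_big.
exists (fun e => (thead e, thead (behead_tuple e), behead_tuple (behead_tuple e))).
  by move=> [[a b] e'] _ /=; rewrite bb_c.
by move=> e _ /=; rewrite -tuple_split.
Qed.

Lemma projE k (x : CF k.+2) e :
  proj x e = x (c true true e) + x (c true false e) + (x (c false true e) + x (c false false e)).
Proof.
rewrite /proj linextE sum_split.
under eq_bigr => a _ do under eq_bigr => b _ do
  (under eq_bigr => e0 _ do rewrite bvecE bb_c; rewrite sum_delta).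
by rewrite !big_bool.
Qed.

Lemma prefixE k a b (y : CF k.+1) a' b' e :
  Defs.prefix a b y (c a' b' e) = if (a' == a) && (b' == b) then y e else 0.
Proof.
rewrite /Defs.prefix linextE.
under eq_bigr => e0 _ do rewrite bvecE /c !cons_eq andbA.
case: ((a' == a) && (b' == b)) => /=; first by rewrite sum_delta.
by rewrite big1 // => e0 _; rewrite mulr0.
Qed.

Definition comp k a b (x : CF k.+2) : CF k.+1 := [ffun e => x (c a b e)].
Arguments comp {k}.

Lemma comp_ext k (x y : CF k.+2) : (forall a b, comp a b x = comp a b y) -> x = y.
Proof.
move=> H; apply/ffunP => e; rewrite (tuple_split e).
by move: (H (thead e) (thead (behead_tuple e))) => /ffunP/(_ (behead_tuple (behead_tuple e))); rewrite !ffunE.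
Qed.

Lemma comp0 k a b : comp a b (0 : CF k.+2) = 0.
Proof. by apply/ffunP => e; rewrite !ffunE. Qed.

Lemma addE m (y z : CF m) e : (y + z) e = y e + z e.
Proof. by rewrite ffunE. Qed.
Arguments addE {m}.

Lemma etaD m (y z : CF m) : eta (y + z) = eta y + eta z.
Proof. by apply/ffunP => e; rewrite (addE (eta y) (eta z) e) [LHS]etaE [LHS]addE; congr (_ + _); apply/esym; exact: etaE. Qed.

Lemma dtilD m (y z : CF m) : dtil (y + z) = dtil y + dtil z.
Proof. by apply/ffunP => e; rewrite (addE (dtil y) (dtil z) e) [LHS]dtilE; rewrite [X in _ = X + _]dtilE [X in _ = _ + X]dtilE -big_split; apply: eq_bigr => i _; rewrite addE. Qed.

Lemma comp_partial k a b (x : CF k.+2) :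
  comp a b (partial x) = comp (~~a) b x + comp a (~~b) x + dtil (comp a b x) + eta (comp (~~a) (~~b) x).
Proof.
apply/ffunP => e; rewrite /partial !ffunE dtilE etaE negt_c dtilE etaE !ffunE.
rewrite big_ord_recl big_ord_recl flip0_c flip1_c !addrA; congr (_ + _ + _ + _).
by apply: eq_bigr => i _; rewrite flipS_c ffunE.
Qed.

Lemma char2 m (y : CF m) : y + y = 0.
Proof. apply/ffunP => e; rewrite !ffunE; case: (y e) => [[|[|n]] Hn] //; by apply/eqP. Qed.

Lemma eq_add0 m (y z : CF m) : y = z <-> y + z = 0.
Proof.
split => [->|H]; first exact: char2.
by rewrite -[z]add0r -H -addrA char2 addr0.
Qed.

Ltac bf e := repeat (match goal with |- context [fun_of_fin ?f e] => move: (fun_of_fin f e) end);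
  repeat (case => [[|[|?]] ?] //); apply/eqP; by [].

Ltac lin := let e := fresh "e" in apply/ffunP => e; rewrite ?addE; bf e.

Lemma compD k a b (y z : CF k.+2) : comp a b (y + z) = comp a b y + comp a b z.
Proof. by apply/ffunP => e; rewrite [RHS]addE [LHS]ffunE [X in _ = X + _]ffunE [X in _ = _ + X]ffunE addE. Qed.

Lemma compP k a b a' b' (y : CF k.+1) :
  comp a b (Defs.prefix a' b' y) = if (a == a') && (b == b') then y else 0.
Proof. apply/ffunP => e; rewrite [LHS]ffunE prefixE. by case: ifP => _ //; rewrite ffunE. Qed.

Lemma projE' k (x : CF k.+2) :
  proj x = comp true true x + comp true false x + (comp false true x + comp false false x).
Proof.
apply/ffunP => e; rewrite projE [RHS]addE [X in _ = X + _]addE [X in _ = _ + X]addE.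
by rewrite [X in _ = X + _ + _]ffunE [X in _ = _ + X + _]ffunE [X in _ = _ + (X + _)]ffunE [X in _ = _ + (_ + X)]ffunE.
Qed.


Definition dgen k (P : bool -> bool -> CF k.+1 -> CF k.+2) (u v w t : CF k.+1) : CF k.+2 :=
  P true true u + P false false u + P false true v
  + P true false v + P true true w + P false true w
  + P true true t.

Section Core.
Variables (k : nat) (E Dt : CF k.+1 -> CF k.+1) (P : bool -> bool -> CF k.+1 -> CF k.+2)
  (Pa : CF k.+2 -> CF k.+2) (pr : CF k.+2 -> CF k.+1).
Hypothesis ED : forall y z, E (y + z) = E y + E z.
Hypothesis DtD : forall y z, Dt (y + z) = Dt y + Dt z.
Hypothesis cP : forall a b a' b' y, comp a b (P a' b' y) = if (a == a') && (b == b') then y else 0.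
Hypothesis cPa : forall a b x, comp a b (Pa x) =
  comp (~~a) b x + comp a (~~b) x + Dt (comp a b x) + E (comp (~~a) (~~b) x).
Hypothesis prE : forall x, pr x = comp true true x + comp true false x + (comp false true x + comp false false x).

Section D.
Variables (u v w t : CF k.+1).
Lemma cTT : comp true true (dgen P u v w t) = u + w + t.
Proof. rewrite /dgen !compD !cP /=. by rewrite ?addr0 ?add0r. Qed.
Lemma cFF : comp false false (dgen P u v w t) = u.
Proof. rewrite /dgen !compD !cP /=. by rewrite ?addr0 ?add0r. Qed.
Lemma cFT : comp false true (dgen P u v w t) = v + w.
Proof. rewrite /dgen !compD !cP /=. by rewrite ?addr0 ?add0r. Qed.
Lemma cTF : comp true false (dgen P u v w t) = v.
Proof. rewrite /dgen !compD !cP /=. by rewrite ?addr0 ?add0r. Qed.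
End D.

Lemma core (x : CF k.+2) :
  Dt (pr x) + E (pr x) = 0 ->
  (exists u v w t : CF k.+1, Dt t + E t = 0 /\ x = dgen P u v w t) /\
  (forall u v w t u' v' w' t' : CF k.+1,
      Dt t + E t = 0 -> x = dgen P u v w t ->
      Dt t' + E t' = 0 -> x = dgen P u' v' w' t' ->
      [/\ u = u', v = v', w = w' & t = t']) /\
  (forall u v w t : CF k.+1,
      Dt t + E t = 0 -> x = dgen P u v w t ->
      (Pa x = 0 <->
        [/\ Dt v + E v = w + t + E w,
            Dt u + E u = w + E t + E w &
            Dt w + E w = 0])).
Proof.
move=> Hp.
have uniq : forall u v w t u' v' w' t', dgen P u v w t = dgen P u' v' w' t' ->
    [/\ u = u', v = v', w = w' & t = t'].
  move=> u v w t u' v' w' t' H.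
  have hTT := congr1 (comp true true) H; have hFF := congr1 (comp false false) H.
  have hFT := congr1 (comp false true) H; have hTF := congr1 (comp true false) H.
  rewrite !cTT in hTT; rewrite !cFF in hFF; rewrite !cFT in hFT; rewrite !cTF in hTF.
  have ew : w = w' by move: hFT; rewrite hTF; apply: addrI.
  have et : t = t' by move: hTT; rewrite hFF ew; apply: addrI.
  by split.
split.
  exists (comp false false x), (comp true false x), (comp false true x + comp true false x), (pr x).
  split=> //; apply: comp_ext => a b.
  case: a; case: b; rewrite ?cTT ?cFF ?cFT ?cTF //; rewrite ?prE;
  move: (comp true true x) (comp true false x) (comp false true x) (comp false false x) => ? ? ? ?; lin.
split; first by move=> u v w t u' v' w' t' _ -> _ /uniq.
move=> u v w t Ht ->.
have Ht' : Dt t = E t by apply/eq_add0.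
set D := dgen P u v w t.
have hTF : comp true false (Pa D) = (Dt v + E v) + (w + t + E w).
  rewrite cPa /= cFF cTT cTF cFT !ED.
  move: (Dt v) (E v) (E w) => ? ? ?; lin.
have hFF : comp false false (Pa D) = (Dt u + E u) + (w + E t + E w).
  rewrite cPa /= cFF cTT cTF cFT !ED.
  move: (Dt u) (E u) (E w) (E t) => ? ? ? ?; lin.
have hFT : comp false true (Pa D) = (Dt v + E v) + (w + t + E w) + (Dt w + E w).
  rewrite cPa /= cFF cTT cTF cFT !DtD.
  move: (Dt v) (E v) (E w) (Dt w) => ? ? ? ?; lin.
have hTT : comp true true (Pa D) = (Dt u + E u) + (w + E t + E w) + (Dt w + E w).
  rewrite cPa /= cFF cTT cTF cFT !DtD Ht'.
  move: (Dt u) (E u) (E w) (Dt w) (E t) => ? ? ? ? ?; lin.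
split.
  move=> H0.
  have z a b : comp a b (Pa D) = 0 by rewrite H0 comp0.
  have q1 := z true false; rewrite hTF in q1.
  have q2 := z false false; rewrite hFF in q2.
  have q3 := z false true; rewrite hFT q1 add0r in q3.
  by split => //; apply/eq_add0.
case=> /eq_add0 q1 /eq_add0 q2 q3.
apply: comp_ext => a b; rewrite comp0.
by case: a; case: b; rewrite ?hTT ?hTF ?hFT ?hFF ?q1 ?q2 ?addr0 ?add0r ?q3.
Qed.
End Core.

Unset Implicit Arguments.

Theorem lemma4p3 (k : nat) (x : CF k.+2) :
  partial (proj x) = 0 ->
  (exists u v w t : CF k.+1, partial t = 0 /\ x = decomp u v w t) /\
  (forall u v w t u' v' w' t' : CF k.+1,
      partial t = 0 -> x = decomp u v w t ->
      partial t' = 0 -> x = decomp u' v' w' t' ->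
      [/\ u = u', v = v', w = w' & t = t']) /\
  (forall u v w t : CF k.+1,
      partial t = 0 -> x = decomp u v w t ->
      (partial x = 0 <->
        [/\ partial v = w + t + eta w,
            partial u = w + eta t + eta w &
            partial w = 0])).
Proof.
move=> Hp.
exact: (@core k (@eta k.+1) (@dtil k.+1) (fun a b y => @Defs.prefix k a b y) (@partial k.+2) (@proj k)
  (@etaD _) (@dtilD _) (@compP k) (@comp_partial k) (@projE' k) x Hp).
Qed.
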